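(* Let $\sigma_\rho>0$ and let $W$ follow the unit-log-normal distribution, i.e. $W$ has PDF $$f_W(w;\sigma_\rho)=\frac{1}{w(1-w)\sigma_\rho}\,\phi(A(w)),\qquad 0<w<1,$$ where $\phi$ is the standard normal PDF and $A(w)=\frac{1}{\sigma_\rho}\log\frac{w}{1-w}$. If $\sigma_\rho\le\sqrt2$, then $f_W(\cdot;\sigma_\rho)$ is unimodal with mode $w_0=1/2$. If $\sigma_\rho>\sqrt2$, then the equation $\frac{\sigma_\rho^2}{2}y={\rm arctanh}(y)$ has exactly two nonzero solutions $y_-<0<y_+=-y_-$, and $f_W(\cdot;\sigma_\rho)$ is bimodal with modes $$w_-=\frac{1}{1+\exp(-\sigma_\rho^2y_-)},\qquad w_+=\frac{1}{1+\exp(-\sigma_\rho^2y_+)},$$ and minimum point $w_0=1/2$, with $0<w_-<w_0<w_+<1$. Moreover, the graph of $f_W(\cdot;\sigma_\rho)$ is symmetric around $w_0=1/2$.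
   Context: This is the unit-log-symmetric distribution ${\rm ULS}(\sigma_\rho,g_c)$ with density generator $g_c(x)=\exp(-x/2)$, where $\sigma_\rho=\sigma\sqrt{2(1-\rho)}$; for this generator the ULS PDF reduces to the displayed formula. *)

(* Defs.v *)
From Stdlib Require Import Reals.
Open Scope R_scope.

Definition phi (x : R) : R := exp (- (x ^ 2) / 2) / sqrt (2 * PI).

Definition A_fun (s w : R) : R := ln (w / (1 - w)) / s.

(* unit-log-normal PDF f_W(w; sigma), meaningful for 0 < w < 1 *)
Definition fW (s w : R) : R := phi (A_fun s w) / (w * (1 - w) * s).

Definition arctanh (y : R) : R := ln ((1 + y) / (1 - y)) / 2.

Definition strict_incr_on (f : R -> R) (a b : R) : Prop :=
  forall x y, a <= x -> x < y -> y <= b -> f x < f y.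
Definition strict_decr_on (f : R -> R) (a b : R) : Prop :=
  forall x y, a <= x -> x < y -> y <= b -> f y < f x.

Definition unimodal01 (f : R -> R) (m : R) : Prop :=
  0 < m < 1 /\
  (forall a, 0 < a -> a <= m -> strict_incr_on f a m) /\
  (forall b, m <= b -> b < 1 -> strict_decr_on f m b).

Definition bimodal01 (f : R -> R) (m1 c m2 : R) : Prop :=
  0 < m1 < c /\ c < m2 < 1 /\
  (forall a, 0 < a -> a <= m1 -> strict_incr_on f a m1) /\
  strict_decr_on f m1 c /\
  strict_incr_on f c m2 /\
  (forall b, m2 <= b -> b < 1 -> strict_decr_on f m2 b).

(* Main.v *)
Require Import Defs.
From Stdlib Require Import Reals Lra Psatz Ranalysis5.
From Coquelicot Require Import Coquelicot.
Open Scope R_scope.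

Definition Lg (w : R) := ln (w / (1 - w)).
Definition Dd (s w : R) := 2 * w - 1 - Lg w / s ^ 2.
Definition Gg (s w : R) := - (Lg w / s) ^ 2 / 2 - ln w - ln (1 - w).

Lemma Gg_der s w : 0 < s -> 0 < w < 1 ->
  derivable_pt_lim (Gg s) w (Dd s w / (w * (1 - w))).
Proof.
  intros hs hw. apply is_derive_Reals. unfold Gg, Dd, Lg.
  auto_derive.
  - repeat split; try lra. apply Rdiv_lt_0_compat; lra.
  - replace (ln (w * / (1 + - w))) with (ln (w/(1-w))) by (f_equal; unfold Rdiv; ring).
    field. repeat split; lra.
Qed.

Lemma Dd_der s w : 0 < s -> 0 < w < 1 ->
  derivable_pt_lim (Dd s) w (2 - / (s^2 * (w * (1 - w)))).
Proof.
  intros hs hw. apply is_derive_Reals. unfold Dd, Lg.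
  auto_derive.
  - repeat split; try lra. apply Rdiv_lt_0_compat; lra.
  - replace (ln (w * / (1 + - w))) with (ln (w/(1-w))) by (f_equal; unfold Rdiv; ring).
    field. repeat split; lra.
Qed.

Lemma fW_eq s w : 0 < s -> 0 < w < 1 -> fW s w = exp (Gg s w) / (sqrt (2 * PI) * s).
Proof.
  intros hs hw. unfold fW, phi, A_fun, Gg, Lg.
  unfold Rminus. rewrite !exp_plus, !exp_Ropp, !exp_ln by lra.
  field. repeat split; try lra.
  apply Rgt_not_eq, sqrt_lt_R0. pose proof PI_RGT_0; lra.
Qed.

Lemma fW_lt s x y : 0 < s -> 0 < x -> x < y -> y < 1 ->
  (forall c, x < c < y -> 0 < Dd s c) -> fW s x < fW s y.
Proof.
  intros hs hx hxy hy hD.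
  rewrite !fW_eq by lra.
  destruct (MVT_cor2 (Gg s) (fun c => Dd s c / (c * (1 - c))) x y hxy) as [c [Hc Hcb]].
  { intros c Hc. apply Gg_der; lra. }
  assert (0 < Dd s c / (c * (1 - c))).
  { apply Rdiv_lt_0_compat. apply hD; lra. apply Rmult_lt_0_compat; lra. }
  assert (Gg s x < Gg s y) by nra.
  apply Rmult_lt_compat_r.
  - apply Rinv_0_lt_compat, Rmult_lt_0_compat; [apply sqrt_lt_R0; pose proof PI_RGT_0; lra| lra].
  - apply exp_increasing; lra.
Qed.

Lemma fW_gt s x y : 0 < s -> 0 < x -> x < y -> y < 1 ->
  (forall c, x < c < y -> Dd s c < 0) -> fW s y < fW s x.
Proof.
  intros hs hx hxy hy hD.
  rewrite !fW_eq by lra.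
  destruct (MVT_cor2 (Gg s) (fun c => Dd s c / (c * (1 - c))) x y hxy) as [c [Hc Hcb]].
  { intros c Hc. apply Gg_der; lra. }
  assert (0 < - Dd s c / (c * (1 - c))).
  { apply Rdiv_lt_0_compat. assert (Dd s c < 0) by (apply hD; lra). lra. apply Rmult_lt_0_compat; lra. }
  assert (Gg s y < Gg s x).
  { assert (Dd s c / (c * (1 - c)) = - (- Dd s c / (c * (1 - c)))) by (field; lra). nra. }
  apply Rmult_lt_compat_r.
  - apply Rinv_0_lt_compat, Rmult_lt_0_compat; [apply sqrt_lt_R0; pose proof PI_RGT_0; lra| lra].
  - apply exp_increasing; lra.
Qed.

Lemma Lg_sym w : 0 < w < 1 -> Lg (1 - w) = - Lg w.
Proof.
  intros hw. unfold Lg. rewrite <- ln_Rinv by (apply Rdiv_lt_0_compat; lra).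
  f_equal. field. lra.
Qed.

Lemma Dd_sym s w : 0 < s -> 0 < w < 1 -> Dd s (1 - w) = - Dd s w.
Proof. intros hs hw. unfold Dd. rewrite Lg_sym by lra. field. lra. Qed.

Lemma fW_sym s w : 0 < s -> 0 < w < 1 -> fW s (1 - w) = fW s w.
Proof.
  intros hs hw. rewrite !fW_eq by lra. unfold Gg. rewrite Lg_sym by lra.
  replace (1 - (1 - w)) with w by ring. f_equal. f_equal. field. lra.
Qed.

Lemma Dd_half s : 0 < s -> Dd s (1/2) = 0.
Proof.
  intros hs. unfold Dd, Lg. replace (1/2 / (1 - 1/2)) with 1 by field.
  rewrite ln_1. field. lra.
Qed.

Lemma Dd_decr s x y : 0 < s -> 0 < x -> x < y -> y < 1 ->
  (forall c, x < c < y -> 2 * s^2 * (c * (1 - c)) < 1) -> Dd s y < Dd s x.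
Proof.
  intros hs hx hxy hy hc.
  destruct (MVT_cor2 (Dd s) (fun c => 2 - / (s^2 * (c * (1 - c)))) x y hxy) as [c [Hc Hcb]].
  { intros c Hc. apply Dd_der; lra. }
  assert (hpos : 0 < s^2 * (c * (1 - c))) by (apply Rmult_lt_0_compat; [nra| nra]).
  assert (2 - / (s^2 * (c * (1 - c))) < 0).
  { assert (h1 := hc c ltac:(lra)).
    assert (/ (s^2 * (c * (1 - c))) * (s^2 * (c * (1 - c))) = 1) by (field; nra).
    assert (0 < / (s^2 * (c * (1 - c)))) by (apply Rinv_0_lt_compat; lra).
    nra. }
  nra.
Qed.

Lemma Dd_incr s x y : 0 < s -> 0 < x -> x < y -> y < 1 ->
  (forall c, x < c < y -> 1 < 2 * s^2 * (c * (1 - c))) -> Dd s x < Dd s y.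
Proof.
  intros hs hx hxy hy hc.
  destruct (MVT_cor2 (Dd s) (fun c => 2 - / (s^2 * (c * (1 - c)))) x y hxy) as [c [Hc Hcb]].
  { intros c Hc. apply Dd_der; lra. }
  assert (hpos : 0 < s^2 * (c * (1 - c))) by (apply Rmult_lt_0_compat; [nra| nra]).
  assert (0 < 2 - / (s^2 * (c * (1 - c)))).
  { assert (h1 := hc c ltac:(lra)).
    assert (/ (s^2 * (c * (1 - c))) * (s^2 * (c * (1 - c))) = 1) by (field; nra).
    assert (0 < / (s^2 * (c * (1 - c)))) by (apply Rinv_0_lt_compat; lra).
    nra. }
  nra.
Qed.

Lemma case_small s : 0 < s -> s^2 <= 2 ->
  (forall w, 1/2 < w < 1 -> Dd s w < 0) /\ (forall w, 0 < w < 1/2 -> 0 < Dd s w).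
Proof.
  intros hs h2.
  assert (H1 : forall w, 1/2 < w < 1 -> Dd s w < 0).
  { intros w hw. rewrite <- (Dd_half s hs). apply Dd_decr; try lra.
    intros c hc. assert (c * (1 - c) < 1/4) by nra. nra. }
  split; auto.
  intros w hw. replace w with (1 - (1 - w)) by ring. rewrite Dd_sym by lra.
  assert (Dd s (1 - w) < 0) by (apply H1; lra). lra.
Qed.

Lemma case_big s : 0 < s -> 2 < s^2 ->
  exists wp, 1/2 < wp < 1 /\ Dd s wp = 0 /\ (forall w, 1/2 < w < wp -> 0 < Dd s w) /\
    (forall w, wp < w < 1 -> Dd s w < 0).
Proof.
  intros hs h2.
  set (r := sqrt (1 - 2 / s^2)).
  assert (hq : 0 < 2 / s^2) by (apply Rdiv_lt_0_compat; nra).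
  assert (hq2 : 2 / s^2 * s^2 = 2) by (field; nra).
  assert (hq1 : 2 / s^2 < 1) by nra.
  assert (hr2 : r * r = 1 - 2 / s^2) by (apply sqrt_sqrt; lra).
  assert (hr0 : 0 <= r) by apply sqrt_pos.
  assert (hr1 : r < 1) by nra.
  assert (hrp : 0 < r) by (destruct hr0 as [|e]; [lra| rewrite <- e in hr2; nra]).
  set (c0 := (1 + r) / 2).
  assert (hc0 : 2 * s^2 * (c0 * (1 - c0)) = 1).
  { unfold c0. replace (2 * s ^ 2 * ((1 + r) / 2 * (1 - (1 + r) / 2))) with
      (s^2 * (1 - r * r) / 2) by field. rewrite hr2. field. nra. }
  assert (P1 : forall w, 1/2 < w <= c0 -> 0 < Dd s w).
  { intros w hw. rewrite <- (Dd_half s hs). apply Dd_incr; try (unfold c0 in *; lra).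
    intros c hc. unfold c0 in *. assert (c0 * (1 - c0) < c * (1 - c)) by (unfold c0; nra). nra. }
  assert (P2 : forall x y, c0 <= x -> x < y -> y < 1 -> Dd s y < Dd s x).
  { intros x y hx hxy hy. apply Dd_decr; try (unfold c0 in *; lra).
    intros c hc. assert (c * (1 - c) < c0 * (1 - c0)) by (unfold c0 in *; nra). nra. }
  set (E := exp (s^2)).
  assert (hE : 1 < E). { unfold E. rewrite <- exp_0. apply exp_increasing. nra. }
  set (w1 := E / (1 + E)).
  assert (hw1 : 1/2 < w1 < 1). { unfold w1. split; apply Rmult_lt_reg_r with (1+E); try lra; field_simplify; lra. }
  assert (hDw1 : Dd s w1 < 0).
  { unfold Dd, Lg. replace (w1 / (1 - w1)) with E by (unfold w1; field; lra).
    unfold E. rewrite ln_exp. replace (s^2/s^2) with 1 by (field; nra). lra. }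
  assert (hw1c : c0 < w1).
  { destruct (Rle_lt_dec w1 c0); auto. assert (0 < Dd s w1) by (apply P1; lra). lra. }
  assert (hc0D : 0 < Dd s c0) by (apply P1; unfold c0; lra).
  destruct (IVT_interv (fun w => - Dd s w) c0 w1) as [wp [hwp hwp0]]; try lra.
  { intros a ha. apply continuity_pt_opp.
    apply derivable_continuous_pt. exists (2 - / (s^2 * (a * (1 - a)))).
    apply Dd_der; unfold c0 in *; lra. }
  simpl in hwp0.
  assert (hwpD : Dd s wp = 0) by lra.
  assert (hwp1 : c0 < wp < w1).
  { split; destruct (Req_dec wp c0), (Req_dec wp w1); subst; try lra. }
  exists wp. split; [unfold c0 in *; lra|]. split; [auto|]. split.
  - intros w hw. destruct (Rle_lt_dec w c0).
    + apply P1; lra.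
    + assert (Dd s wp < Dd s w) by (apply P2; lra). lra.
  - intros w hw. assert (Dd s w < Dd s wp) by (apply P2; lra). lra.
Qed.

Theorem theorem1 (s : R) (hs : 0 < s) :
  (s <= sqrt 2 -> unimodal01 (fW s) (1 / 2)) /\
  (sqrt 2 < s ->
     exists ym yp : R,
       ym < 0 /\ 0 < yp /\ yp = - ym /\
       (forall y : R, -1 < y < 1 -> y <> 0 ->
          (s ^ 2 / 2 * y = arctanh y <-> (y = ym \/ y = yp))) /\
       let wm := 1 / (1 + exp (- (s ^ 2) * ym)) in
       let wp := 1 / (1 + exp (- (s ^ 2) * yp)) in
       0 < wm /\ wm < 1 / 2 /\ 1 / 2 < wp /\ wp < 1 /\
       bimodal01 (fW s) wm (1 / 2) wp) /\
  (forall w : R, 0 < w < 1 -> fW s (1 - w) = fW s w).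
Proof.
  assert (h22 : sqrt 2 * sqrt 2 = 2) by (apply sqrt_sqrt; lra).
  assert (h2p : 0 <= sqrt 2) by apply sqrt_pos.
  split; [|split].
  - intros hle. assert (hs2 : s^2 <= 2) by nra.
    destruct (case_small s hs hs2) as [Hn Hp].
    split; [lra|split].
    + intros a ha ham x y hx hxy hy. apply fW_lt; try lra.
      intros c hc. apply Hp; lra.
    + intros b hb hb1 x y hx hxy hy. apply fW_gt; try lra.
      intros c hc. apply Hn; lra.
  - intros hlt. assert (hs2 : 2 < s^2) by nra.
    destruct (case_big s hs hs2) as [wp [hwp [hD0 [Hp Hn]]]].
    assert (Hp' : forall w, 0 < w < 1 - wp -> 0 < Dd s w).
    { intros w hw. replace w with (1 - (1 - w)) by ring. rewrite Dd_sym by lra.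
      assert (Dd s (1 - w) < 0) by (apply Hn; lra). lra. }
    assert (Hn' : forall w, 1 - wp < w < 1/2 -> Dd s w < 0).
    { intros w hw. replace w with (1 - (1 - w)) by ring. rewrite Dd_sym by lra.
      assert (0 < Dd s (1 - w)) by (apply Hp; lra). lra. }
    assert (hL : s^2 * (2 * wp - 1) = Lg wp).
    { unfold Dd in hD0. assert (s^2 <> 0) by nra.
      apply Rmult_eq_reg_r with (/ s^2); [|apply Rinv_neq_0_compat; auto].
      rewrite Rmult_comm, <- Rmult_assoc, Rinv_l by auto. unfold Rdiv in hD0. lra. }
    exists (1 - 2 * wp), (2 * wp - 1).
    split; [lra|split;[lra|split;[lra|split]]].
    + intros y hy hy0.
      assert (hA : arctanh y = Lg ((1 + y) / 2) / 2).
      { unfold arctanh, Lg. f_equal. f_equal. field. lra. }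
      rewrite hA.
      assert (hDe : Dd s ((1 + y) / 2) = (s^2/2 * y - Lg ((1+y)/2) / 2) * (2 / s^2)).
      { unfold Dd. field. nra. }
      assert (s^2 <> 0) by nra.
      set (w := (1 + y) / 2) in *.
      assert (hw : 0 < w < 1) by (unfold w; lra).
      split.
      * intros heq. assert (Dd s w = 0) by (rewrite hDe; rewrite heq; ring).
        destruct (Rtotal_order w (1 - wp)) as [h|[h|h]].
        { assert (0 < Dd s w) by (apply Hp'; lra). lra. }
        { left. unfold w in h. lra. }
        destruct (Rtotal_order w (1/2)) as [h'|[h'|h']].
        { assert (Dd s w < 0) by (apply Hn'; lra). lra. }
        { unfold w in h'. lra. }
        destruct (Rtotal_order w wp) as [h''|[h''|h'']].
        { assert (0 < Dd s w) by (apply Hp; lra). lra. }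
        { right. unfold w in h''. lra. }
        { assert (Dd s w < 0) by (apply Hn; lra). lra. }
      * intros hyy.
        assert (hz : Dd s w = 0).
        { destruct hyy as [e|e].
          - replace w with (1 - wp) by (unfold w; lra). rewrite Dd_sym by lra. lra.
          - replace w with wp by (unfold w; lra). auto. }
        rewrite hDe in hz.
        assert (0 < 2 / s^2) by (apply Rdiv_lt_0_compat; nra).
        destruct (Rmult_integral _ _ hz); lra.
    + assert (hpos : 0 < wp / (1 - wp)) by (apply Rdiv_lt_0_compat; lra).
      assert (Hm : 1 / (1 + exp (- s ^ 2 * (1 - 2 * wp))) = 1 - wp).
      { replace (- s ^ 2 * (1 - 2 * wp)) with (Lg wp) by lra. unfold Lg.
        rewrite exp_ln by auto. field. lra. }
      assert (Hq : 1 / (1 + exp (- s ^ 2 * (2 * wp - 1))) = wp).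
      { replace (- s ^ 2 * (2 * wp - 1)) with (- Lg wp) by lra. unfold Lg.
        rewrite exp_Ropp, exp_ln by auto. field. lra. }
      cbv zeta. rewrite Hm, Hq.
      split; [lra|split;[lra|split;[lra|split;[lra|]]]].
      split; [lra|split;[lra|split;[|split;[|split]]]].
      * intros a ha ham x y hx hxy hy. apply fW_lt; try lra.
        intros c hc. apply Hp'; lra.
      * intros x y hx hxy hy. apply fW_gt; try lra.
        intros c hc. apply Hn'; lra.
      * intros x y hx hxy hy. apply fW_lt; try lra.
        intros c hc. apply Hp; lra.
      * intros b hb hb1 x y hx hxy hy. apply fW_gt; try lra.
        intros c hc. apply Hn; lra.
  - intros w hw. apply fW_sym; auto.
Qed.
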